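(* Let $K$ be a field of characteristic $\neq2$ with involution $a\mapsto\bar a$, let $\varepsilon\in\{1,-1\}$ with $\varepsilon=1$ if the involution is nonidentity, and let $\Phi$ be an $n\times n$ Frobenius block with characteristic polynomial $\chi(x)$. A nonsingular matrix $X$ with $X=X^*$ and $X\Phi=\varepsilon(X\Phi)^*$ exists if and only if (B1) $\chi(x)=\varepsilon^n\bar\chi(\varepsilon x)$, and (B2) $\chi(x)\notin\{x^2,x^4,x^6,\dots\}$ if $\varepsilon=-1$. When these hold, one can take $X=[\varepsilon^ia_{i+j}]_{i,j=1}^n$, where $(a_2,a_3,\dots,a_{2n})$ is the $\chi$-recurrent sequence determined by $(a_2,\dots,a_{n+1})=(1,0,\dots,0)$ if $\Phi$ is nonsingular and $(a_2,\dots,a_{n+1})=(0,\dots,0,1)$ if $\Phi$ is singular.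
   Context: $M^*=[\bar m_{ji}]$ for $M=[m_{ij}]$. For $f=a_0x^n+\dots+a_n$, $\bar f=\bar a_0x^n+\dots+\bar a_n$. A Frobenius block is an $n\times n$ matrix with ones on the subdiagonal, last column $(-c_n,\dots,-c_1)^T$, zeros elsewhere, and characteristic polynomial $x^n+c_1x^{n-1}+\dots+c_n$ a power of an irreducible polynomial. For $f(x)=\gamma_0x^m+\dots+\gamma_m$, a sequence $(a_q,\dots,a_r)$ is $f$-recurrent if $\gamma_0a_{l+m}+\gamma_1a_{l+m-1}+\dots+\gamma_ma_l=0$ for $q\le l\le r-m$. *)

(* Defs.v *)
From mathcomp Require Import all_boot all_order all_algebra.
Set Implicit Arguments. Unset Strict Implicit. Unset Printing Implicit Defensive.
Import GRing.Theory.
Local Open Scope ring_scope.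

Definition cstar (K : fieldType) (inv : K -> K) n (M : 'M[K]_n) : 'M[K]_n :=
  \matrix_(i, j) inv (M j i).

(* Frobenius-type matrix of a monic p = x^n + c_1 x^(n-1) + ... + c_n:
   ones on the subdiagonal, last column (-c_n, ..., -c_1)^T, zeros elsewhere.
   Row i (0-indexed) of the last column holds -c_(n-i) = - p`_i. *)
Definition frob_mx (K : fieldType) n (p : {poly K}) : 'M[K]_n :=
  \matrix_(i < n, j < n)
    ((i == j.+1 :> nat)%:R + (j == n.-1 :> nat)%:R * - p`_i).

Definition frobenius_block (K : fieldType) n (A : 'M[K]_n) : Prop :=
  exists p : {poly K},
    [/\ p \is monic, size p = n.+1, A = frob_mx n p,
        char_poly A = p &
        exists (q : {poly K}) (k : nat), [/\ (0 < k)%N, irreducible_poly q & p = q ^+ k]].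

Definition recurrent (K : fieldType) (f : {poly K}) (q r : nat) (a : nat -> K)
  : Prop :=
  let m := (size f).-1 in
  forall l : nat, (q <= l)%N -> (l + m <= r)%N ->
    \sum_(i < m.+1) f`_(m - i) * a (l + m - i)%N = 0.

(* Main.v *)
Require Import Defs.
From mathcomp Require Import all_boot all_order all_algebra perm zify.
Import GRing.Theory.
Local Open Scope ring_scope.

Lemma coef_comp_scaleX (K : fieldType) (p : {poly K}) (e : K) k :
  (p \Po (e *: 'X))`_k = p`_k * e ^+ k.
Proof.
rewrite comp_polyE.
have -> : \sum_(i < size p) p`_i *: (e *: 'X) ^+ i =
          \poly_(i < size p) (p`_i * e ^+ i).
  rewrite poly_def; apply: eq_bigr => i _.
  by rewrite exprZn scalerA.
rewrite coef_poly; case: ltnP => // hk.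
by rewrite nth_default // mul0r.
Qed.

Section Eps.
Variable (K : fieldType) (e : K) (he : e * e = 1).

Lemma eps_pow m : e ^+ m = e ^+ (odd m).
Proof.
rewrite -{1}(odd_double_half m) exprD -muln2 mulnC exprM expr2 he expr1n.
by rewrite mulr1.
Qed.

Lemma eps_eq a b : odd a = odd b -> e ^+ a = e ^+ b.
Proof. by move=> h; rewrite eps_pow h -eps_pow. Qed.
End Eps.

Lemma char_polyZ_eps (K : fieldType) n (M : 'M[K]_n) (e : K) (he : e * e = 1) :
  char_poly (e *: M) = e ^+ n *: (char_poly M \Po (e *: 'X)).
Proof.
have key : e%:P *: char_poly_mx (e *: M) =
    map_mx (comp_poly (e *: 'X)) (char_poly_mx M).
  apply/matrixP => i j; rewrite !mxE.
  case: (i == j) => /=; rewrite ?mulr1n ?mulr0n ?sub0r ?mulrN ?mulrBr;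
    rewrite ?rmorphB ?rmorphN /= ?comp_polyX ?comp_polyC ?polyCM -?mul_polyC;
    rewrite ?mulrA -?polyCM ?he //.
  by rewrite mul1r.
  by rewrite mul1r.
have := congr1 determinant key.
rewrite detZ det_map_mx => h.
rewrite /char_poly -h -mul_polyC mulrA polyC_exp -exprMn -polyCM he expr1n.
by rewrite mul1r.
Qed.

Lemma char_polyT (K : fieldType) n (M : 'M[K]_n) : char_poly M^T = char_poly M.
Proof.
rewrite /char_poly -det_tr; congr determinant.
apply/matrixP => i j; rewrite !mxE eq_sym //.
Qed.

Lemma char_poly_intertw (K : fieldType) n (X A B : 'M[K]_n) :
  X \in unitmx -> X *m A = B *m X -> char_poly A = char_poly B.
Proof.
move=> hX hAB.
have key : map_mx polyC X *m char_poly_mx A = char_poly_mx B *m map_mx polyC X.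
  rewrite /char_poly_mx mulmxBr mulmxBl -!map_mxM hAB.
  by rewrite -scalemx1 -scalemxAl -scalemxAr mulmx1 mul1mx.
have := congr1 determinant key.
rewrite !det_mulmx det_map_mx [_ * (_ %:P)]mulrC => h.
apply: (mulfI _ h).
by rewrite polyC_eq0 -unitfE -unitmxE.
Qed.

Lemma eps_cancel (K : fieldType) (e : K) (he : e * e = 1) a b c (x : K) :
  odd a = odd (b + c) -> e ^+ a * (e ^+ b * (x * e ^+ c)) = x.
Proof.
move=> h; rewrite [x * _]mulrC !mulrA -!exprD (@eps_eq _ e he _ 0) ?mul1r //.
by rewrite !oddD h oddD; case: (odd b); case: (odd c).
Qed.

Lemma sum_delta (K : fieldType) n (F : 'I_n.+1 -> K) m :
  \sum_(k < n.+1) F k * (k == m :> nat)%:R = if (m < n.+1)%N then F (inord m) else 0.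
Proof.
case: ltnP => hm.
  rewrite (bigD1 (inord m)) //= inordK // eqxx mulr1 big1 ?addr0 // => k hk.
  rewrite (_ : (k == m :> nat) = false) ?mulr0 //; apply/negbTE.
  apply: contra hk => /eqP h; apply/eqP/val_inj; by rewrite /= inordK // h.
apply: big1 => k _; rewrite (_ : (k == m :> nat) = false) ?mulr0 //.
by apply/negbTE; rewrite neq_ltn (leq_trans (ltn_ord k) hm).
Qed.

Lemma mul_frob (K : fieldType) n (p : {poly K}) (X : 'M[K]_n.+1) i j :
  (X *m frob_mx n.+1 p) i j =
  (if (j.+1 < n.+1)%N then X i (inord j.+1) else 0)
  + (j == n :> nat)%:R * - \sum_k X i k * p`_k.
Proof.
rewrite !mxE.
under eq_bigr => k _ do rewrite mxE mulrDr.
rewrite big_split /= sum_delta; congr (_ + _).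
rewrite mulrN mulr_sumr -sumrN; apply: eq_bigr => k _.
by rewrite mulrN mulrCA mulrN.
Qed.

Lemma cstarE (K : fieldType) (inv : K -> K) n (M : 'M[K]_n) :
  cstar inv M = (map_mx inv M)^T.
Proof. by apply/matrixP => i j; rewrite !mxE. Qed.

Lemma cstarM (K : fieldType) (inv : {rmorphism K -> K}) n (A B : 'M[K]_n) :
  cstar inv (A *m B) = cstar inv B *m cstar inv A.
Proof. by rewrite !cstarE map_mxM trmx_mul. Qed.

Lemma unit_trig_perm (K : fieldType) n (X : 'M[K]_n) (f : 'I_n -> 'I_n) :
  injective f -> (forall i j : 'I_n, (i < j)%N -> X i (f j) = 0) ->
  (forall i, X i (f i) != 0) -> X \in unitmx.
Proof.
move=> finj hz hd.
set s := perm finj.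
have ht : is_trig_mx (col_perm s X).
  apply/forallP => i; apply/forallP => j; apply/implyP => h; apply/eqP.
  by rewrite mxE permE hz.
have hdet : \det (col_perm s X) != 0.
  rewrite (det_trig ht); apply/prodf_neq0 => i _.
  by rewrite mxE permE hd.
move: hdet; rewrite col_permE det_mulmx => h.
by rewrite unitmxE unitfE; apply: contra h => /eqP ->; rewrite mul0r.
Qed.

Lemma horner_mx_sum (K : fieldType) n (A : 'M[K]_n.+1) (p : {poly K}) :
  horner_mx A p = \sum_(i < size p) p`_i *: A ^+ i.
Proof.
rewrite -{1}(coefK p) poly_def rmorph_sum; apply: eq_bigr => i _.
by rewrite -mul_polyC rmorphM /= horner_mx_C rmorphXn /= horner_mx_X -mul_scalar_mx mulmxE.
Qed.

Lemma rec_reindex (K : fieldType) (p : {poly K}) n (a : nat -> K) l :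
  \sum_(i < n.+1) p`_(n - i) * a (l + n - i)%N =
  \sum_(t < n.+1) p`_t * a (l + t)%N.
Proof.
rewrite (reindex_inj rev_ord_inj) /=; apply: eq_bigr => i _.
have hi := ltn_ord i; rewrite subSS.
have e1 : (n - (n - i) = i)%N by lia.
have e2 : (l + n - (n - i) = l + i)%N by lia.
by rewrite e1 e2.
Qed.

Section Part2.
Variables (K : fieldType) (inv : {rmorphism K -> K}) (e : K).
Hypotheses (he : e * e = 1) (hinve : inv e = e).
Variables (n : nat) (p : {poly K}) (a : nat -> K).
Local Notation N := n.+1.
Hypothesis hpn : p`_N = 1.
Hypothesis hB1c : forall k, inv p`_k = e ^+ (N + k) * p`_k.
Hypothesis hinit : forall k, (2 <= k <= N.+1)%N -> inv (a k) = e ^+ k * a k.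
Hypothesis hrec : forall l, (2 <= l)%N -> (l + N <= 2 * N)%N ->
  a (l + N)%N = - \sum_(t < N) p`_t * a (l + t)%N.

Definition bseq s := if (s <= 2 * N)%N then a s
  else - \sum_(t < N) p`_t * a (s - N + t)%N.

Lemma rec_b l : (2 <= l <= N.+1)%N ->
  bseq (l + N) = - \sum_(t < N) p`_t * a (l + t)%N.
Proof.
case/andP => h1 h2; rewrite /bseq; case: ifP => h3.
  by rewrite hrec.
by rewrite addnK.
Qed.

Lemma inv_epow m : inv (e ^+ m) = e ^+ m.
Proof. by rewrite rmorphXn hinve. Qed.

Lemma b_conj s : (2 <= s <= (2 * N).+1)%N -> inv (bseq s) = e ^+ s * bseq s.
Proof.
elim/ltn_ind: s => s IH /andP [hs1 hs2].
case: (leqP s N.+1) => hsN.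
  have -> : bseq s = a s by rewrite /bseq ifT //; lia.
  by apply: hinit; rewrite hs1 hsN.
have -> : s = ((s - N) + N)%N by lia.
rewrite rec_b; last by lia.
rewrite rmorphN rmorph_sum mulrN mulr_sumr; congr (- _).
apply: eq_bigr => t _.
have ht := ltn_ord t.
have hb : a (s - N + t)%N = bseq (s - N + t) by rewrite /bseq ifT //; lia.
rewrite rmorphM hB1c hb IH; last by lia.
  rewrite mulrCA !mulrA -!exprD; congr (_ * _ * _).
  by apply: eps_eq => //; rewrite !oddD; case: (odd _); case: (odd _); case: (odd _).
by lia.
Qed.

Lemma a_conj s : (2 <= s <= 2 * N)%N -> inv (a s) = e ^+ s * a s.
Proof.
move=> h; have hb : a s = bseq s by rewrite /bseq ifT //; lia.
by rewrite hb b_conj //; lia.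
Qed.

Definition Xmx : 'M[K]_N := \matrix_(i < N, j < N) (e ^+ i.+1 * a (i.+1 + j.+1)%N).

Lemma Xmx_herm : Xmx = cstar inv Xmx.
Proof.
apply/matrixP => i j; rewrite !mxE rmorphM inv_epow a_conj; last first.
  have := ltn_ord i; have := ltn_ord j; lia.
rewrite mulrA -exprD [(j.+1 + i.+1)%N]addnC; congr (_ * _).
by apply: eps_eq => //; rewrite !oddD; case: (odd _); case: (odd _).
Qed.

Lemma XPhiE i j : (Xmx *m frob_mx N p) i j = e ^+ i.+1 * bseq (i + j + 3).
Proof.
rewrite mul_frob; have hi := ltn_ord i; have hj := ltn_ord j.
case: ltnP => hjn.
  rewrite (_ : (j == n :> nat) = false); last by apply/negbTE; lia.
  rewrite mul0r addr0 mxE inordK //.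
  rewrite /bseq ifT; last by lia.
  by congr (_ * a _); lia.
have hjn' : (j == n :> nat) by lia.
rewrite hjn' mul1r add0r.
have -> : (i + j + 3 = (i + 2) + N)%N by lia.
rewrite rec_b; last by lia.
rewrite mulrN mulr_sumr; congr (- _); apply: eq_bigr => k _.
rewrite mxE -mulrA [a _ * _]mulrC; congr (_ * (_ * a _)); lia.
Qed.

Lemma XPhi_herm : Xmx *m frob_mx N p = e *: cstar inv (Xmx *m frob_mx N p).
Proof.
apply/matrixP => i j; rewrite [in RHS]mxE /cstar [in RHS]mxE !XPhiE rmorphM inv_epow b_conj; last first.
  have := ltn_ord i; have := ltn_ord j; lia.
rewrite !mulrA -exprS -exprD.
have -> : (j + i + 3 = i + j + 3)%N by lia.
congr (_ * _); apply: eps_eq => //; rewrite /= !oddD /=.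
by case: (odd _); case: (odd _).
Qed.
End Part2.

Lemma e_neq0 (K : fieldType) (e : K) : e * e = 1 -> e != 0.
Proof. by move=> he; apply/eqP => h; move: he; rewrite h mul0r => /eqP; rewrite eq_sym oner_eq0. Qed.

Lemma unit_sing (K : fieldType) (e : K) (he : e * e = 1) n (a : nat -> K) :
  (forall k, (2 <= k <= n.+2)%N -> a k = (k == n.+2)%:R) ->
  \matrix_(i < n.+1, j < n.+1) (e ^+ i.+1 * a (i.+1 + j.+1)%N) \in unitmx.
Proof.
move=> ha; apply: (@unit_trig_perm _ _ _ (@rev_ord n.+1) (@rev_ord_inj n.+1)).
  move=> i j hij; rewrite mxE /= ha; last by have := ltn_ord j; lia.
  rewrite (_ : (_ == _) = false) ?mulr0 //; apply/negbTE.
  by have := ltn_ord j; lia.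
move=> i; rewrite mxE /= ha; last by have := ltn_ord i; lia.
rewrite (_ : (_ == n.+2)%N = true) ?mulr1; last by have := ltn_ord i; lia.
by rewrite expf_neq0 // e_neq0.
Qed.

Lemma unit_nonsing (K : fieldType) (e : K) (he : e * e = 1) n (a : nat -> K)
  (p : {poly K}) (p0 : p`_0 != 0) :
  (forall k, (2 <= k <= n.+2)%N -> a k = (k == 2)%:R) ->
  ((2 + n.+1 <= 2 * n.+1)%N -> a (2 + n.+1)%N = - \sum_(t < n.+1) p`_t * a (2 + t)%N) ->
  \matrix_(i < n.+1, j < n.+1) (e ^+ i.+1 * a (i.+1 + j.+1)%N) \in unitmx.
Proof.
move=> ha hr.
pose f := fun j : 'I_n.+1 => (inord (if j == 0 :> nat then 0%N else (n.+1 - (j : nat))%N) : 'I_n.+1).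
have finj : injective f.
  move=> j k /(congr1 val); rewrite /f /= !inordK; last 2 first.
  - by case: eqP => ?; lia.
  - by case: eqP => ?; lia.
  by move=> h; apply: val_inj => /=; have := ltn_ord j; have := ltn_ord k;
     move: h; case: eqP; case: eqP; lia.
apply: (@unit_trig_perm _ _ _ f finj).
  move=> i j hij; have hj := ltn_ord j.
  rewrite mxE /f inordK; last by case: eqP => ?; lia.
  rewrite (_ : (j == 0 :> nat) = false); last by apply/negbTE; lia.
  rewrite ha; last by lia.
  rewrite (_ : (_ == _) = false) ?mulr0 //; apply/negbTE; lia.
move=> i; have hi := ltn_ord i.
rewrite mxE /f inordK; last by case: eqP => ?; lia.
case: ifP => /eqP hi0.
  rewrite ha; last by lia.
  by rewrite (_ : (_ == 2)%N = true) ?mulr1 ?expf_neq0 ?e_neq0 //; lia.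
have -> : (i.+1 + (n.+1 - i).+1 = 2 + n.+1)%N by lia.
rewrite hr; last by lia.
rewrite big_ord_recl /= ha // mulr1 big1 ?addr0.
  by rewrite mulf_neq0 ?oppr_eq0 // expf_neq0 // e_neq0.
move=> t _; rewrite ha; last by have := ltn_ord t; rewrite /bump /=; lia.
by rewrite (_ : (_ == _) = false) ?mulr0.
Qed.

Lemma frob_pow (K : fieldType) n (p : {poly K}) (i : 'I_n.+1) j :
  (j < n.+1)%N -> ((frob_mx n.+1 p) ^+ j) i 0 = (i == j :> nat)%:R.
Proof.
elim: j i => [|j IH] i hj.
  by rewrite expr0 mxE.
rewrite exprS -mulmxE mxE.
have hj' : (j < n.+1)%N by apply: ltnW.
under eq_bigr => k _ do rewrite (IH k hj').
rewrite sum_delta ifT; last by apply: ltnW.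
rewrite mxE inordK; last by apply: ltnW.
rewrite (_ : (j == n.+1.-1 :> nat) = false) ?mul0r ?addr0 //.
by apply/negbTE; lia.
Qed.

Lemma seq_exists (K : fieldType) n (p : {poly K}) (i0 : 'I_n.+1) :
  char_poly (frob_mx n.+1 p) = p -> size p = n.+2 ->
  let a := fun k => ((frob_mx n.+1 p) ^+ (k - 2)) i0 0 in
  (forall k, (2 <= k <= n.+2)%N -> a k = (i0 == (k - 2)%N :> nat)%:R) /\
  recurrent p 2 (2 * n.+1) a.
Proof.
move=> hchi hsize a; split.
  by move=> k hk; rewrite /a frob_pow //; lia.
rewrite /recurrent hsize /= => l hl _.
rewrite rec_reindex.
set Phi := frob_mx n.+1 p.
have H : horner_mx Phi p = \sum_(t < n.+2) p`_t *: Phi ^+ t.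
  by rewrite horner_mx_sum hsize.
have h0 : (Phi ^+ (l - 2) *m horner_mx Phi p) i0 0 = 0.
  by have := Cayley_Hamilton Phi; rewrite hchi => ->; rewrite mulmx0 mxE.
apply: (eq_trans _ h0); rewrite H mulmx_sumr summxE; apply: eq_bigr => t _.
rewrite -scalemxAr mxE mulmxE -exprD /a.
by congr (_ * ((Phi ^+ _) i0 0)); lia.
Qed.

Lemma nil_even (K : fieldType) (char2 : (2%:R : K) != 0) n (X : 'M[K]_n.+1) :
  odd n -> X = X^T ->
  X *m frob_mx n.+1 'X^(n.+1) = - (X *m frob_mx n.+1 'X^(n.+1))^T ->
  X \notin unitmx.
Proof.
move=> hodd hsym hsk.
set Y := X *m _ in hsk.
have hY : forall i j, Y i j = - Y j i.
  by move=> i j; rewrite {1}hsk !mxE.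
have YE : forall i j : 'I_n.+1, Y i j = if (j.+1 < n.+1)%N then X i (inord j.+1) else 0.
  move=> i j; rewrite /Y mul_frob big1 ?oppr0 ?mulr0 ?addr0 // => k _.
  by rewrite coefXn (_ : (k == n.+1 :> nat) = false) ?mulr0 //; apply/negbTE; have := ltn_ord k; lia.
have XS : forall i j : nat, (i <= n)%N -> (j <= n)%N -> X (inord i) (inord j) = X (inord j) (inord i).
  by move=> i j _ _; rewrite {1}hsym mxE.
have F1 : forall j : nat, (j < n)%N -> X (inord n) (inord j.+1) = 0.
  move=> j hj.
  have := hY (inord n) (inord j); rewrite !YE !inordK //; try lia.
  by rewrite ifT; last lia; rewrite ifF ?oppr0 //; lia.
have F2 : forall i j : nat, (i < n)%N -> (j < n)%N ->
    X (inord i) (inord j.+1) = - X (inord i.+1) (inord j).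
  move=> i j hi hj.
  have := hY (inord i) (inord j); rewrite !YE !inordK ?ifT //; try lia.
  by move=> ->; rewrite XS //; lia.
pose g i := X (inord i) (inord (n - i)).
have hg : forall i, (i <= n)%N -> g i = (-1) ^+ i * g 0.
  elim=> [|i IH] hi; first by rewrite expr0 mul1r.
  rewrite exprS -mulrA -IH; last by lia.
  rewrite /g.
  have -> : (n - i = (n - i.+1).+1)%N by lia.
  by rewrite F2 ?mulN1r ?opprK //; lia.
have hn0 : X (inord n) (inord 0) = 0.
  have := hg n (leqnn n); rewrite /g subnn subn0 -signr_odd hodd expr1 mulN1r.
  rewrite XS ?leqnn // => /eqP; rewrite -subr_eq0 opprK -mulr2n -mulr_natr.
  by rewrite mulf_eq0 (negbTE char2) orbF => /eqP.
rewrite unitmxE unitfE negbK (expand_det_row _ (inord n)).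
apply/eqP; apply: big1 => j _.
have -> : j = inord j by rewrite inord_val.
case hj: (nat_of_ord j) => [|j'].
  by rewrite hn0 mul0r.
rewrite F1 ?mul0r //; have := ltn_ord j; lia.
Qed.

Lemma sing_X (K : fieldType) (p q : {poly K}) k :
  irreducible_poly q -> p = q ^+ k -> p \is monic -> p`_0 = 0 ->
  p = 'X^((size p).-1).
Proof.
move=> [hq1 hq] hpq hm h0.
have hr : root q 0.
  apply/eqP; have : p.[0] = 0 by rewrite horner_coef0.
  by rewrite hpq horner_exp => /eqP; rewrite expf_eq0 => /andP [_ /eqP].
have hX : 'X %| q by move: hr; rewrite root_factor_theorem subr0.
have hXq : 'X %= q by apply: hq; rewrite ?size_polyX.
have hp : p %= 'X^k by rewrite hpq; apply: eqp_exp; rewrite eqp_sym.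
have : p = 'X^k by apply/eqP; rewrite -eqp_monic ?monicXn.
by move=> ->; rewrite size_polyXn.
Qed.

Theorem theorem8 (K : fieldType) (inv : {rmorphism K -> K})
  (inv_invol : involutive inv) (char2 : (2%:R : K) != 0)
  (eps : K) (heps : eps = 1 \/ eps = -1)
  (heps_id : (exists a : K, inv a != a) -> eps = 1)
  (n : nat) (Phi : 'M[K]_n) (hPhi : frobenius_block Phi) :
  let chi := char_poly Phi in
  let B1 := chi = eps ^+ n *: ((map_poly inv chi) \Po (eps *: 'X)) in
  let B2 := eps = -1 -> ~ (exists k : nat, (0 < k)%N /\ chi = 'X^(2 * k)) in
  ((exists X : 'M[K]_n,
      [/\ X \in unitmx, X = cstar inv X &
          X *m Phi = eps *: cstar inv (X *m Phi)])
   <-> (B1 /\ B2))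
  /\
  (B1 -> B2 ->
   forall a : nat -> K,
     (forall k : nat, (2 <= k <= n.+1)%N ->
        a k = (if Phi \in unitmx then (k == 2)%N%:R else (k == n.+1)%N%:R)) ->
     recurrent chi 2 (2 * n) a ->
     let X := \matrix_(i < n, j < n) (eps ^+ i.+1 * a (i.+1 + j.+1)%N) in
     [/\ X \in unitmx, X = cstar inv X &
         X *m Phi = eps *: cstar inv (X *m Phi)]).
Proof.
have he : eps * eps = 1 by case: heps => ->; rewrite ?mulr1 ?mulrNN ?mulr1.
have hinve : inv eps = eps by case: heps => ->; rewrite ?rmorph1 ?rmorphN1.
case: hPhi => p [hmon hsize hPhiE hchiE [q [k [hk hq hpq]]]].
have hn : (0 < n)%N.
  case: hq => hq1 _.
  have := size_exp q k; rewrite -hpq hsize /= => h.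
  case: n {Phi hPhiE hchiE} hsize h => // _ h.
  by case: (size q) hq1 h => [|[|s]] //= _ h; nia.
case: n Phi hPhiE hchiE hsize hn => // n Phi hPhiE hchiE hsize _.
rewrite hchiE.
move=> chi B1 B2.
have hpn : p`_n.+1 = 1.
  by move/monicP: hmon; rewrite lead_coefE hsize.
have hsingX : Phi \notin unitmx -> p = 'X^(n.+1).
  move=> hu; have h0 : p`_0 = 0.
    rewrite -hchiE char_poly_det.
    by move: hu; rewrite unitmxE unitfE negbK => /eqP ->; rewrite mulr0.
  by rewrite {1}(@sing_X _ p q k hq hpq hmon h0) hsize.
have hp0 : Phi \in unitmx -> p`_0 != 0.
  move=> hu; rewrite -hchiE char_poly_det mulf_neq0 ?signr_eq0 //.
  by move: hu; rewrite unitmxE unitfE.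
have P2 : B1 -> B2 ->
   forall a : nat -> K,
   (forall k0 : nat,
    (1 < k0 <= n.+2)%N ->
    a k0 = (if Phi \in unitmx then (k0 == 2%N)%:R else (k0 == n.+2)%:R)) ->
   recurrent chi 2 (2 * n.+1) a ->
   let X := \matrix_(i < n.+1, j < n.+1) (eps ^+ i.+1 * a (i.+1 + j.+1)%N) in
   [/\ X \in unitmx, X = cstar inv X
     & X *m Phi = eps *: cstar inv (X *m Phi)].
  move=> hB1 hB2 a ha hrec X.
  have hB1c : forall j, inv p`_j = eps ^+ (n.+1 + j) * p`_j.
    move=> j; have hj := congr1 (fun r : {poly K} => r`_j) hB1.
    rewrite /= coefZ coef_comp_scaleX coef_map /= in hj.
    by rewrite {2}hj eps_cancel.
  have hsing_eps : Phi \notin unitmx -> eps ^+ n.+2 = 1.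
    move=> hu; case: heps => hE; first by rewrite hE expr1n.
    have hodd : odd n.+1.
      case hev : (odd n.+1) => //; exfalso; apply: (hB2 hE); exists (n.+1)./2; split.
        by rewrite half_gt0 ltnS lt0n; apply/eqP => h0; rewrite h0 in hev.
      by rewrite /chi (hsingX hu) mul2n even_halfK // hev.
    rewrite (@eps_eq _ eps he _ 0) ?expr0 //.
    by move: hodd; rewrite /= => /negbTE ->.
  have hinit : forall j, (2 <= j <= n.+2)%N -> inv (a j) = eps ^+ j * a j.
    move=> j hj; rewrite ha //; case: ifP => hu; rewrite rmorph_nat;
      case: eqP => [->|_]; rewrite ?eqxx ?mulr0 ?mulr1 //.
    by rewrite /= hsing_eps ?hu.
  have hrec' : forall l, (2 <= l)%N -> (l + n.+1 <= 2 * n.+1)%N ->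
      a (l + n.+1)%N = - \sum_(t < n.+1) p`_t * a (l + t)%N.
    move=> l h1 h2; move: (hrec l h1); rewrite /chi hsize /= => /(_ h2).
    rewrite rec_reindex big_ord_recr /= hpn mul1r => /eqP.
    by rewrite addrC addr_eq0 => /eqP.
  have hXE : X = Xmx K eps n a by [].
  split.
  - case hu : (Phi \in unitmx).
      apply: (@unit_nonsing K eps he n a p (hp0 hu)).
        by move=> j hj; rewrite ha // hu.
      by move=> h; apply: hrec'.
    apply: (@unit_sing K eps he n a).
    by move=> j hj; rewrite ha // hu.
  - by rewrite hXE; apply: (@Xmx_herm K inv eps he hinve n p a hB1c hinit hrec').
  - by rewrite hXE hPhiE; apply: (@XPhi_herm K inv eps he hinve n p a hB1c hinit hrec').
split => //.
split.
- case=> X [hXu hXh hXs].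
  have hinter : X *m Phi = (eps *: cstar inv Phi) *m X.
    by rewrite {1}hXs cstarM -hXh scalemxAl.
  have hc := @char_poly_intertw _ _ _ _ _ hXu hinter.
  have hB1 : B1.
    rewrite /B1 /chi -{1}hchiE hc (@char_polyZ_eps _ _ _ _ he) cstarE char_polyT.
    by rewrite -map_char_poly hchiE.
  split => // hE [k' [hk' hX2]].
  have hid : forall x, inv x = x.
    move=> x; apply/eqP; apply/negPn/negP => hx.
    have h1 := heps_id (ex_intro _ x hx).
    move: hE; rewrite h1 => /eqP; rewrite -subr_eq0 opprK -mulr2n.
    by rewrite (negbTE char2).
  have hcs : forall M : 'M[K]_n.+1, cstar inv M = M^T.
    by move=> M; apply/matrixP => i j; rewrite !mxE hid.
  have hN : n.+1 = (2 * k')%N.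
    by move: hsize; rewrite -/chi hX2 size_polyXn => -[].
  have hodd : odd n by have := congr1 odd hN; rewrite /= oddM /= => /negbFE.
  move: hXu; apply/negP; apply: (@nil_even K char2 n X hodd).
    by rewrite -hcs.
  rewrite hE scaleN1r hcs in hXs.
  have hpX : p = 'X^(n.+1) by rewrite hN; exact: hX2.
  by rewrite -hpX -hPhiE.
- case=> hB1 hB2.
  pose i0 : 'I_n.+1 := if Phi \in unitmx then ord0 else ord_max.
  have hPc : char_poly (frob_mx n.+1 p) = p by rewrite -hPhiE.
  have [hai hrr] := @seq_exists K n p i0 hPc hsize.
  set a := fun k => _ in hai hrr.
  have hin : forall j, (1 < j <= n.+2)%N ->
      a j = (if Phi \in unitmx then (j == 2%N)%:R else (j == n.+2)%:R).
    move=> j hj; rewrite /a hai // /i0; case: (Phi \in unitmx) => /=.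
      by congr (_ %:R); apply/eqP; lia.
    by congr (_ %:R); apply/eqP; lia.
  have [hXu hXh hXs] := P2 hB1 hB2 a hin hrr.
  by exists (\matrix_(i < n.+1, j < n.+1) (eps ^+ i.+1 * a (i.+1 + j.+1)%N)); split.
Qed.
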